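(* Let $\alpha\in\mathbb{R}^n$ be badly approximable with constant $D=D(\alpha)>0$, i.e. $\max_{1\le j\le n}\min_{a_j\in\mathbb{Z}}|p\alpha_j-a_j|\ge Dp^{-1/n}$ for all $p\in\mathbb{N}$, and let $f$ be a strictly convex norm on $\mathbb{R}^n$. Then there exist $w=w(D,f)\in\mathbb{N}$ and $\delta=\delta(D,f)>0$ such that for every $\nu\ge1$ there is a natural $j$ with $\nu\le j\le\nu+w$ and $$\Xi_{j+1}\notin B_f^{1+\delta}(\Xi_j),$$ where $\Xi_j=\xi_j/f(\xi_j)$, $\xi_j=\alpha p_j-a_j$, and $(p_j,a_j)$ is the $j$-th $f$-best simultaneous approximation to $\alpha$.
   Context: A norm $f$ here is a continuous function $\mathbb{R}^n\to\mathbb{R}_+$ with $f(x)=0\iff x=0$, $f(-x)=f(x)$, $f(tx)=tf(x)$ for $t\ge0$, and convex unit ball $B_f^1=\{y:f(y)\le1\}$ with $0$ in its interior; $f$ is strictly convex if $B_f^1$ is strictly convex (its boundary contains no line segments). $B_f^\lambda(a)=\{y: f(y-a)\le\lambda\}$. For $\alpha\in\mathbb{R}^n$, an $f$-best simultaneous approximation is an integer point $\tau=(p,a_1,\dots,a_n)\in\mathbb{Z}^{n+1}$ with $p\ge1$ such that $f(\alpha q-b)>f(\alpha p-a)$ for all $(q,b)\in\mathbb{Z}^{n+1}$ with $1\le q\le p-1$ and for all $(p,b)$ with $b\ne a$. They form a sequence $(p_\nu,a_\nu)$ with $p_1<p_2<\dots$. *)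

(* Defs.v *)
From HB Require Import structures.
From mathcomp Require Import all_boot all_order all_algebra.
From mathcomp Require Import all_classical all_reals all_analysis.
Set Implicit Arguments. Unset Strict Implicit. Unset Printing Implicit Defensive.
Import Order.TTheory GRing.Theory Num.Theory.
Import numFieldNormedType.Exports.
Local Open Scope classical_set_scope.
Local Open Scope ring_scope.

Definition fball (R : realType) (n : nat) (f : 'rV[R]_n -> R) (lam : R) (a : 'rV[R]_n)
  : set 'rV[R]_n := [set y | f (y - a) <= lam].

Definition is_norm (R : realType) (n : nat) (f : 'rV[R]_n -> R) : Prop :=
  continuous f /\
  (forall x, 0 <= f x) /\
  (forall x, f x = 0 <-> x = 0) /\
  (forall x, f (- x) = f x) /\
  (forall (t : R) x, 0 <= t -> f (t *: x) = t * f x) /\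
  (forall x y (t : R), fball f 1 0 x -> fball f 1 0 y -> 0 <= t <= 1 ->
      fball f 1 0 ((1 - t) *: x + t *: y)) /\
  nbhs (0 : 'rV[R]_n) (fball f 1 0).

Definition strictly_convex_norm (R : realType) (n : nat) (f : 'rV[R]_n -> R) : Prop :=
  is_norm f /\
  forall x y : 'rV[R]_n, x != y ->
    ~ (forall t : R, 0 <= t <= 1 ->
         (closure (fball f 1 0) `\` interior (fball f 1 0)) ((1 - t) *: x + t *: y)).

(* Distance from x to the nearest integer: min_{a in Z} |x - a|. *)
Definition distZ (R : realType) (x : R) : R :=
  Num.min (x - (Num.floor x)%:~R) ((Num.floor x + 1)%:~R - x).

Definition badly_approx (R : realType) (n : nat) (alpha : 'rV[R]_n) (D : R) : Prop :=
  forall p : nat, (1 <= p)%N ->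
    D * ((p%:R : R) `^ (- (n%:R)^-1)) <=
      \big[Num.max/0]_(j < n) distZ ((p%:R : R) * alpha 0 j).

Definition xi (R : realType) (n : nat) (alpha : 'rV[R]_n) (p : nat) (a : 'rV[int]_n)
  : 'rV[R]_n := (p%:R : R) *: alpha - map_mx (fun z : int => z%:~R) a.

Definition best_approx (R : realType) (n : nat) (f : 'rV[R]_n -> R)
  (alpha : 'rV[R]_n) (p : nat) (a : 'rV[int]_n) : Prop :=
  (1 <= p)%N /\
  (forall (q : nat) (b : 'rV[int]_n), (1 <= q <= p - 1)%N ->
      f (xi alpha p a) < f (xi alpha q b)) /\
  (forall b : 'rV[int]_n, b != a -> f (xi alpha p a) < f (xi alpha p b)).

(* (P, A) (indexed from 1) is the sequence of all f-best approximations,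
   listed with strictly increasing denominators p_1 < p_2 < ... *)
Definition best_approx_seq (R : realType) (n : nat) (f : 'rV[R]_n -> R)
  (alpha : 'rV[R]_n) (P : nat -> nat) (A : nat -> 'rV[int]_n) : Prop :=
  (forall j, (1 <= j)%N -> best_approx f alpha (P j) (A j)) /\
  (forall j, (1 <= j)%N -> (P j < P j.+1)%N) /\
  (forall p a, best_approx f alpha p a -> exists2 j, (1 <= j)%N & P j = p /\ A j = a).

(* Main.v *)
Require Import Defs.
From HB Require Import structures.
From mathcomp Require Import all_boot all_order all_algebra.
From mathcomp Require Import all_classical all_reals all_analysis.
From mathcomp Require Import ring lra zify.
Import Order.TTheory GRing.Theory Num.Theory.
Import numFieldNormedType.Exports.
Local Open Scope classical_set_scope.
Local Open Scope ring_scope.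
Set Implicit Arguments. Unset Strict Implicit. Unset Printing Implicit Defensive.

Lemma nf_ge0 (R : realType) n (f : 'rV[R]_n -> R) : is_norm f -> forall x, 0 <= f x.
Proof. by case=> _ [h _]. Qed.

Lemma nf_eq0 (R : realType) n (f : 'rV[R]_n -> R) : is_norm f -> forall x, f x = 0 <-> x = 0.
Proof. by case=> _ [_ [h _]]. Qed.

Lemma nf0 (R : realType) n (f : 'rV[R]_n -> R) : is_norm f -> f 0 = 0.
Proof. by move=> hf; apply/(nf_eq0 hf). Qed.

Lemma nfN (R : realType) n (f : 'rV[R]_n -> R) : is_norm f -> forall x, f (- x) = f x.
Proof. by case=> _ [_ [_ [h _]]]. Qed.

Lemma nfZp (R : realType) n (f : 'rV[R]_n -> R) : is_norm f ->
  forall (t : R) x, 0 <= t -> f (t *: x) = t * f x.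
Proof. by case=> _ [_ [_ [_ [h _]]]]. Qed.

Lemma nfZ (R : realType) n (f : 'rV[R]_n -> R) : is_norm f ->
  forall (t : R) x, f (t *: x) = `|t| * f x.
Proof.
move=> hf t x; have [t0|t0] := leP 0 t.
  by rewrite ger0_norm // (nfZp hf).
rewrite ltr0_norm // -(nfN hf) -scaleNr (nfZp hf) //; lra.
Qed.

Lemma nfD (R : realType) n (f : 'rV[R]_n -> R) : is_norm f ->
  forall x y, f (x + y) <= f x + f y.
Proof.
move=> hf x y.
have [/eqP|hx] := eqVneq (f x) 0.
  by move/eqP/(nf_eq0 hf) => ->; rewrite add0r (nf0 hf) add0r.
have [/eqP|hy] := eqVneq (f y) 0.
  by move/eqP/(nf_eq0 hf) => ->; rewrite addr0 (nf0 hf) addr0.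
have fx0 : 0 < f x by rewrite lt_def hx (nf_ge0 hf).
have fy0 : 0 < f y by rewrite lt_def hy (nf_ge0 hf).
set s := f x + f y.
have s0 : 0 < s by rewrite /s; lra.
have [_ [_ [_ [_ [_ [cvx _]]]]]] := hf.
have bx : fball f 1 0 ((f x)^-1 *: x).
  rewrite /fball /= subr0 (nfZp hf) ?invr_ge0 ?(nf_ge0 hf) //.
  by rewrite mulVf.
have by' : fball f 1 0 ((f y)^-1 *: y).
  rewrite /fball /= subr0 (nfZp hf) ?invr_ge0 ?(nf_ge0 hf) //.
  by rewrite mulVf.
have t01 : 0 <= f y / s <= 1.
  apply/andP; split; first by rewrite divr_ge0 // ltW.
  by rewrite ler_pdivrMr // mul1r /s; lra.
have := cvx _ _ _ bx by' t01.
rewrite /fball /= subr0.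
have -> : (1 - f y / s) *: ((f x)^-1 *: x) + f y / s *: ((f y)^-1 *: y)
   = s^-1 *: (x + y).
  have -> : 1 - f y / s = f x / s by rewrite /s; field; lra.
  rewrite !scalerA scalerDr; congr (_ *: _ + _ *: _); field; lra.
rewrite (nfZp hf); last by rewrite invr_ge0 ltW.
by rewrite mulrC ler_pdivrMr // mul1r.
Qed.

Lemma nfB (R : realType) n (f : 'rV[R]_n -> R) : is_norm f ->
  forall x y, f (x - y) = f (y - x).
Proof. by move=> hf x y; rewrite -(nfN hf) opprB. Qed.

Lemma nf_sum (R : realType) n (f : 'rV[R]_n -> R) : is_norm f ->
  forall (I : Type) (r : seq I) (P : pred I) (F : I -> 'rV[R]_n),
  f (\sum_(i <- r | P i) F i) <= \sum_(i <- r | P i) f (F i).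
Proof.
move=> hf I r P F; elim: r => [|a r IH]; first by rewrite !big_nil (nf0 hf).
rewrite !big_cons; case: (P a) => //; apply: le_trans (nfD hf _ _) _; exact: lerD.
Qed.

Lemma nf_cvx (R : realType) n (f : 'rV[R]_n -> R) : is_norm f ->
  forall x y (t : R), 0 <= t <= 1 ->
  f ((1 - t) *: x + t *: y) <= (1 - t) * f x + t * f y.
Proof.
move=> hf x y t /andP[t0 t1].
apply: le_trans (nfD hf _ _) _.
by rewrite !(nfZp hf) // subr_ge0.
Qed.

Lemma nf_upper (R : realType) n (f : 'rV[R]_n -> R) : is_norm f ->
  forall x : 'rV[R]_n,
  f x <= \sum_(j < n) `|x 0 j| * f (delta_mx 0 j).
Proof.
move=> hf x; rewrite {1}(matrix_sum_delta x) big_ord1.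
have := nf_sum hf (index_enum 'I_n) xpredT (fun j => x ord0 j *: delta_mx ord0 j).
move=> h; apply: le_trans h _.
by apply: ler_sum => j _; rewrite (nfZ hf).
Qed.

Lemma closed_preim_eq {T : topologicalType} (R : realType) (g : T -> R) a :
  continuous g -> closed [set x | g x = a].
Proof.
move=> cg.
have -> : [set x | g x = a] = g @^-1` [set x | a <= x] `&` g @^-1` [set x | x <= a].
  apply/seteqP; split => x /=; first by move=> ->; rewrite lexx.
  by move=> [h1 h2]; apply/eqP; rewrite eq_le h1 h2.
by apply: closedI; apply: (proj1 (continuous_closedP _) cg); [exact: closed_ge | exact: closed_le].
Qed.

Lemma closed_preim_ge {T : topologicalType} (R : realType) (g : T -> R) a :
  continuous g -> closed [set x | a <= g x].
Proof.
move=> cg; exact: (proj1 (continuous_closedP _) cg _ (@closed_ge R a)).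
Qed.

Lemma closed_preim_le {T : topologicalType} (R : realType) (g : T -> R) a :
  continuous g -> closed [set x | g x <= a].
Proof.
move=> cg; exact: (proj1 (continuous_closedP _) cg _ (@closed_le R a)).
Qed.

Lemma coord_le_norm (R : realType) n (x : 'rV[R]_n) i : `|x 0 i| <= `|x|.
Proof.
change (`|x 0 i| <= mx_norm x); rewrite mx_normrE.
exact: (le_bigmax _ (fun ij : 'I_1 * 'I_n => `|x ij.1 ij.2|) (0, i)).
Qed.

Lemma norm_le_coord (R : realType) n (x : 'rV[R]_n) M :
  0 <= M -> (forall i, `|x 0 i| <= M) -> `|x| <= M.
Proof.
move=> M0 h; change (mx_norm x <= M); rewrite mx_normrE.
apply: bigmax_le => // [[i j]] _ /=; by rewrite ord1.
Qed.

Lemma nf_cont (R : realType) n (f : 'rV[R]_n -> R) : is_norm f -> continuous f.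
Proof. by case. Qed.
Arguments nf_cont {R n f} hf.

Lemma nf_lower (R : realType) n (f : 'rV[R]_n -> R) : (1 <= n)%N -> is_norm f ->
  exists2 c : R, 0 < c & forall x, c * `|x| <= f x.
Proof.
move=> n1 hf.
pose S := [set x : 'rV[R]_n | `|x| = 1].
have S0 : S !=set0.
  pose e : 'rV[R]_n := const_mx 1.
  have e0 : e != 0.
    apply/negP => /eqP/matrixP/(_ 0 (Ordinal n1)); rewrite !mxE => /eqP.
    by rewrite oner_eq0.
  exists (`|e|^-1 *: e); rewrite /S /= normrZ normfV normr_id mulVf //.
  by rewrite normr_eq0.
have cS : compact S.
  apply: bounded_closed_compact; last exact: closed_preim_eq norm_continuous.
  exists 1; split; first by rewrite num_real.
  by move=> M M1 x /= ->; rewrite ltW.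
have [c0 Sc0 minc] := compact_EVT_min S0 cS (continuous_subspaceT (nf_cont hf)).
have nc0 : `|c0| = 1 by move: Sc0; rewrite inE.
have c0pos : 0 < f c0.
  rewrite lt_def (nf_ge0 hf) andbT; apply/eqP => /(nf_eq0 hf) c00.
  by move: nc0; rewrite c00 normr0 => /eqP; rewrite eq_sym oner_eq0.
exists (f c0) => // x.
have [->|x0] := eqVneq x 0; first by rewrite normr0 mulr0 (nf0 hf).
have nx0 : 0 < `|x| by rewrite normr_gt0.
have := minc (`|x|^-1 *: x); rewrite inE /S /= normrZ normfV normr_id mulVf ?gt_eqF //.
move=> /(_ erefl); rewrite (nfZp hf); last by rewrite invr_ge0 ltW.
move=> h.
by rewrite mulrC -ler_pdivlMl // mulrC.
Qed.

Lemma fst_cont {X Y : topologicalType} : continuous (@fst X Y).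
Proof. move=> [x y]; exact: cvg_fst. Qed.
Arguments fst_cont {X Y}.
Lemma snd_cont {X Y : topologicalType} : continuous (@snd X Y).
Proof. move=> [x y]; exact: cvg_snd. Qed.
Arguments snd_cont {X Y}.

Lemma cont_pair (R : realType) n (f : 'rV[R]_n -> R) (a b : R) : is_norm f ->
  continuous (fun p : 'rV[R]_n * 'rV[R]_n => f (a *: p.2 - b *: p.1)).
Proof.
move=> hf p.
have h1 : {for p, continuous (fun p : 'rV[R]_n * 'rV[R]_n => a *: p.2 - b *: p.1)}.
  apply: continuousB; apply: continuousZ; try exact: cvg_cst.
    exact: snd_cont.
  exact: fst_cont.
exact: (continuous_comp h1 (nf_cont hf _)).
Qed.

Arguments cont_pair {R n f} a b hf.

Lemma cont_fst_f (R : realType) n (f : 'rV[R]_n -> R) : is_norm f ->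
  continuous (fun p : 'rV[R]_n * 'rV[R]_n => f p.1).
Proof.
move=> hf p.
exact: (continuous_comp (fst_cont p) (nf_cont hf _)).
Qed.

Lemma cont_snd_f (R : realType) n (f : 'rV[R]_n -> R) : is_norm f ->
  continuous (fun p : 'rV[R]_n * 'rV[R]_n => f p.2).
Proof.
move=> hf p.
exact: (continuous_comp (snd_cont p) (nf_cont hf _)).
Qed.

Lemma sphere_bd (R : realType) n (f : 'rV[R]_n -> R) : is_norm f ->
  forall z, f z = 1 -> (closure (fball f 1 0) `\` interior (fball f 1 0)) z.
Proof.
move=> hf z fz; split.
  by apply: subset_closure; rewrite /fball /= subr0 fz.
rewrite /interior /= => /nbhs_ballP [e /= e0 sub].
pose eta := e / (2 * (`|z| + 1)).
have eta0 : 0 < eta by rewrite /eta divr_gt0 // mulr_gt0 // ltr_wpDl.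
have : ball z e ((1 + eta) *: z).
  rewrite -ball_normE /ball_ /=.
  have -> : z - (1 + eta) *: z = (- eta) *: z by rewrite scalerDl scale1r opprD addrA subrr add0r scaleNr.
  rewrite normrZ normrN gtr0_norm // /eta.
  rewrite -mulrA gtr_pMr //.
  have nz := normr_ge0 z.
  rewrite mulrC ltr_pdivrMr; last by rewrite mulr_gt0 // ltr_wpDl.
  lra.
move/sub; rewrite /fball /= subr0 (nfZp hf); last by rewrite ltW // ltr_wpDl.
rewrite fz mulr1; lra.
Qed.

Lemma strict_seg (R : realType) n (f : 'rV[R]_n -> R) : strictly_convex_norm f ->
  forall x y, f x = 1 -> f y = 1 -> x != y ->
  exists2 t : R, 0 <= t <= 1 & f ((1 - t) *: x + t *: y) < 1.
Proof.
move=> [hf sc] x y fx fy xy.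
have := sc x y xy; rewrite -existsNE => -[t ht].
have t01 : 0 <= t <= 1.
  apply/negPn/negP => ht'; apply: ht => ht''; by rewrite ht'' in ht'.
exists t => //.
have le1 : f ((1 - t) *: x + t *: y) <= 1.
  apply: le_trans (nf_cvx hf x y t01) _; rewrite fx fy; lra.
rewrite lt_neqAle le1 andbT; apply/eqP => h1; apply: ht => _.
exact: sphere_bd.
Qed.

Lemma KC0 (R : realType) n (f : 'rV[R]_n -> R) : strictly_convex_norm f ->
  forall (s : R) U V, 0 < s < 1 -> f U = 1 -> f V = 1 -> f (V - U) <= 1 ->
  1 <= f (s *: V - U) -> False.
Proof.
move=> [hf sc] s U V /andP[s0 s1] fU fV fVU fsVU.
have sc' : strictly_convex_norm f by [].
have fx : f (- U) = 1 by rewrite (nfN hf).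
have s01 : 0 <= s <= 1 by apply/andP; split; lra.
have ey : s *: V - U = (1 - s) *: (- U) + s *: (V - U).
  by apply/rowP => i; rewrite !mxE; ring.
have fy : f (s *: V - U) = 1.
  apply/eqP; rewrite eq_le fsVU andbT ey.
  apply: le_trans (nf_cvx hf _ _ s01) _; rewrite fx.
  have := ler_wpM2l (ltW s0) fVU; lra.
have xy : - U != s *: V - U.
  apply/negP => /eqP h.
  have : s *: V = 0 by apply/rowP => i; move/rowP: h => /(_ i); rewrite !mxE => h; lra.
  move/eqP; rewrite scaler_eq0 (gt_eqF s0) /= => /eqP V0.
  by move: fV; rewrite V0 (nf0 hf) => /eqP; rewrite eq_sym oner_eq0.
have [t /andP[t0 t1] ft] := strict_seg sc' fx fy xy.
set u := t * s.
have ez : (1 - t) *: - U + t *: (s *: V - U) = u *: V - U.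
  by apply/rowP => i; rewrite !mxE /u; ring.
rewrite ez in ft.
have u1 : u < 1 by rewrite /u; nra.
have u0 : 0 <= u by rewrite /u mulr_ge0 // ltW.
have us : u <= s by rewrite /u; nra.
set lam := (1 - s) / (1 - u).
have lam0 : 0 < lam by rewrite /lam divr_gt0; lra.
have lam1 : lam <= 1 by rewrite /lam ler_pdivrMr; lra.
have lam01 : 0 <= 1 - lam <= 1 by apply/andP; split; lra.
have ey2 : s *: V - U = (1 - (1 - lam)) *: (u *: V - U) + (1 - lam) *: (V - U).
  apply/rowP => i; rewrite !mxE /lam; field; lra.
have h3 := nf_cvx hf (u *: V - U) (V - U) lam01; rewrite -ey2 fy in h3.
have h2 : (1 - lam) * f (V - U) <= (1 - lam) * 1 by rewrite ler_wpM2l //; lra.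
have h1 : lam * f (u *: V - U) < lam * 1 by rewrite ltr_pM2l.
move: h1 h2 h3; set a := f (u *: V - U); set b := f (V - U); move=> h1 h2 h3.
have e1 : 1 - (1 - lam) = lam by ring.
rewrite e1 in h3.
lra.
Qed.

Lemma KC (R : realType) n (f : 'rV[R]_n -> R) : (1 <= n)%N -> strictly_convex_norm f ->
  forall s : R, 0 < s < 1 ->
  exists2 d : R, 0 < d & forall U V, f U = 1 -> f V = 1 -> f (V - U) <= 1 + d ->
    f (s *: V - U) < 1.
Proof.
move=> n1 sc s s01; have hf := sc.1.
have [c c0 hc] := nf_lower n1 hf.
pose S1 := [set x : 'rV[R]_n | f x = 1].
have cS1 : compact S1.
  apply: bounded_closed_compact; last exact: closed_preim_eq (nf_cont hf).
  exists (c^-1); split; first by rewrite num_real.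
  move=> M M1 x /= fx; apply: ltW; apply: le_lt_trans M1.
  by rewrite -[c^-1]mulr1 ler_pdivlMl // -fx hc.
pose K := (S1 `*` S1) `&` [set p : 'rV[R]_n * 'rV[R]_n | 1 <= f (s *: p.2 - 1 *: p.1)].
have cK : compact K.
  apply: compact_closedI; first exact: compact_setX.
  exact: closed_preim_ge (cont_pair s 1 hf).
have inK U V : f U = 1 -> f V = 1 -> 1 <= f (s *: V - U) -> K (U, V).
  by move=> fU fV h; split => //=; rewrite scale1r.
have [Kne|K0] := pselect (K !=set0); last first.
  exists 1 => // U V fU fV _; rewrite ltNge; apply/negP => h.
  by apply: K0; exists (U, V); exact: inK.
have [[U0 V0] K00 minK] := compact_EVT_min Kne cK
  (continuous_subspaceT (cont_pair 1 1 hf)).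
move: K00; rewrite inE => -[[/= fU0 fV0] /= hK0]; rewrite scale1r in hK0.
rewrite /= !scale1r in minK.
set m := f (V0 - U0) in minK.
have m1 : 1 < m.
  rewrite ltNge; apply/negP => hm.
  exact: (KC0 sc s01 fU0 fV0 hm hK0).
exists ((m - 1) / 2); first by rewrite divr_gt0 // subr_gt0.
move=> U V fU fV hd; rewrite ltNge; apply/negP => h.
have := minK (U, V); rewrite inE /= !scale1r => /(_ (inK _ _ fU fV h)).
move: hd; rewrite -/m; lra.
Qed.

Lemma xiE (R : realType) n (alpha : 'rV[R]_n) p a i :
  xi alpha p a 0 i = p%:R * alpha 0 i - (a 0 i)%:~R.
Proof. by rewrite /xi !mxE. Qed.

Lemma P_incr (R : realType) n (f : 'rV[R]_n -> R) alpha P A :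
  best_approx_seq f alpha P A -> forall j k, (1 <= j)%N -> (j < k)%N -> (P j < P k)%N.
Proof.
move=> [_ [hP _]] j k j1; elim: k => // k IH.
rewrite ltnS leq_eqVlt => /orP [/eqP <-|jk]; first exact: hP.
apply: ltn_trans (IH jk) (hP _ _); exact: leq_trans j1 (ltnW jk).
Qed.

Lemma P_ge1 (R : realType) n (f : 'rV[R]_n -> R) alpha P A :
  best_approx_seq f alpha P A -> forall j, (1 <= j)%N -> (1 <= P j)%N.
Proof. by move=> [h _] j /h []. Qed.

Lemma L_decr (R : realType) n (f : 'rV[R]_n -> R) alpha P A :
  best_approx_seq f alpha P A -> forall j k, (1 <= j)%N -> (j < k)%N ->
  f (xi alpha (P k) (A k)) < f (xi alpha (P j) (A j)).
Proof.
move=> hs j k j1 jk.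
have k1 : (1 <= k)%N by apply: leq_trans j1 (ltnW jk).
have [_ [h2 _]] := hs.1 k k1.
apply: h2; rewrite (P_ge1 hs j1) /=.
have := P_incr hs j1 jk; lia.
Qed.

Lemma int_norm_ge1 (R : realType) (z : int) : z != 0 -> 1 <= `|(z%:~R : R)|.
Proof.
move=> z0; rewrite -intr_norm ler1z.
by rewrite -gtz0_ge1 normr_gt0.
Qed.

Lemma unique_b (R : realType) n (f : 'rV[R]_n -> R) (c : R) alpha q (b b' : 'rV[int]_n) :
  is_norm f -> 0 < c -> (forall x, c * `|x| <= f x) ->
  f (xi alpha q b) < c / 2 -> f (xi alpha q b') < c / 2 -> b = b'.
Proof.
move=> hf c0 hc h1 h2; apply/rowP => i.
apply/eqP; apply/negP => /negP bi.
pose d := xi alpha q b - xi alpha q b'.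
have di : d 0 i = (b' 0 i - b 0 i)%:~R by rewrite /d !mxE intrB; ring.
have hd : f d < c by apply: le_lt_trans (nfD hf _ _) _; rewrite (nfN hf); lra.
have : c <= c * `|d| .
  apply: le_trans (ler_wpM2l (ltW c0) (coord_le_norm d i)).
  rewrite -[X in X <= _]mulr1 ler_wpM2l ?(ltW c0) // di; apply: int_norm_ge1.
  by rewrite subr_eq0 eq_sym.
have := hc d; lra.
Qed.

Lemma exists_best (R : realType) n (f : 'rV[R]_n -> R) (c : R) alpha :
  is_norm f -> 0 < c -> (forall x, c * `|x| <= f x) ->
  forall q0 b0, (1 <= q0)%N -> f (xi alpha q0 b0) < c / 2 ->
  exists p a, [/\ best_approx f alpha p a, (p <= q0)%N &
                  f (xi alpha p a) <= f (xi alpha q0 b0)].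
Proof.
move=> hf c0 hc q0; elim/ltn_ind: q0 => q0 IH b0 q1 h.
have [[q [b [/andP[q1' qq0] hb]]]|nex] :=
  pselect (exists q b, (1 <= q < q0)%N /\ f (xi alpha q b) <= f (xi alpha q0 b0)).
  have [p [a [hpa pq fa]]] := IH q qq0 b q1' (le_lt_trans hb h).
  exists p, a; split => //; [exact: leq_trans pq (ltnW qq0) | exact: le_trans fa hb].
exists q0, b0; split => //; split => //; split.
  move=> q b /andP[q1' qq0]; rewrite ltNge; apply/negP => hle.
  by apply: nex; exists q, b; split => //; rewrite q1' /=; lia.
move=> b bb0; rewrite ltNge; apply/negP => hle.
have := unique_b hf c0 hc (le_lt_trans hle h) h.
by move=> e; rewrite e eqxx in bb0.
Qed.

Lemma claimB (R : realType) n (f : 'rV[R]_n -> R) (c : R) alpha P A :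
  is_norm f -> 0 < c -> (forall x, c * `|x| <= f x) ->
  best_approx_seq f alpha P A ->
  forall j q b, (1 <= j)%N -> (1 <= q)%N -> (q < P j.+1)%N ->
  Num.min (f (xi alpha (P j) (A j))) (c / 2) <= f (xi alpha q b).
Proof.
move=> hf c0 hc hs j q b j1 q1 qP.
rewrite leNgt; apply/negP; rewrite lt_min => /andP[hL hc2].
have [p [a [hpa pq fa]]] := exists_best hf c0 hc q1 hc2.
have [k k1 [Pk Ak]] := hs.2.2 p a hpa.
have kj : (k <= j)%N.
  rewrite leqNgt; apply/negP => jk.
  move: jk; rewrite leq_eqVlt => /orP[/eqP e|lt]; first by rewrite -e in Pk; lia.
  have := P_incr hs (leq_trans j1 (leqnSn j)) lt; lia.
move: kj; rewrite leq_eqVlt => /orP[/eqP kj|kj].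
  by move: fa; rewrite -Pk -Ak kj; lra.
have := L_decr hs k1 kj; move: fa; rewrite -Pk -Ak; lra.
Qed.

Lemma xi_sub (R : realType) n (alpha : 'rV[R]_n) p q (a b : 'rV[int]_n) :
  (q <= p)%N -> xi alpha p a - xi alpha q b = xi alpha (p - q) (a - b).
Proof.
move=> qp; apply/rowP => i; rewrite !mxE natrB // intrB; ring.
Qed.

Lemma local_step (R : realType) n (f : 'rV[R]_n -> R) (c : R) alpha P A :
  is_norm f -> 0 < c -> (forall x, c * `|x| <= f x) ->
  best_approx_seq f alpha P A ->
  forall j, (1 <= j)%N ->
  Num.min (f (xi alpha (P j) (A j))) (c / 2) <=
    f (xi alpha (P j.+1) (A j.+1) - xi alpha (P j) (A j)).
Proof.
move=> hf c0 hc hs j j1.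
have hPj := hs.2.1 j j1; have hP1 := P_ge1 hs j1.
rewrite xi_sub; last exact: ltnW.
apply: (claimB hf c0 hc hs) => //; lia.
Qed.

Lemma par_dvd (a b : int) : ((a %% 2)%Z == 0) = ((b %% 2)%Z == 0) -> (2 %| (a - b))%Z.
Proof. move=> h. rewrite -eqz_mod_dvd. apply/eqP. move: h. lia. Qed.

Lemma P_mono (R : realType) n (f : 'rV[R]_n -> R) alpha P A :
  best_approx_seq f alpha P A -> forall j k, (1 <= j)%N -> (j <= k)%N -> (P j <= P k)%N.
Proof.
move=> hs j k j1; rewrite leq_eqVlt => /orP[/eqP->//|jk].
exact: ltnW (P_incr hs j1 jk).
Qed.

Lemma pair_lemma (R : realType) n (f : 'rV[R]_n -> R) alpha P A :
  is_norm f -> best_approx_seq f alpha P A ->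
  forall k1 k2, (1 <= k1)%N -> (k1 < k2)%N -> odd (P k1) = odd (P k2) ->
  (forall j, ((A k1 ord0 j %% 2)%Z == 0) = ((A k2 ord0 j %% 2)%Z == 0)) ->
  (3 * P k1 <= P k2)%N.
Proof.
move=> hf hs k1 k2 k11 k12 hodd hA.
rewrite leqNgt; apply/negP => hlt.
have hP12 := P_incr hs k11 k12.
have ev : (2 %| P k2 - P k1)%N.
  by rewrite dvdn2 oddB ?(ltnW hP12) // hodd addbb.
set q := ((P k2 - P k1) %/ 2)%N.
have hq : (q * 2 = P k2 - P k1)%N by rewrite divnK.
pose d := A k2 - A k1.
pose b := map_mx (fun z : int => (z %/ 2)%Z) d.
have hb : forall j, (((A k2 ord0 j - A k1 ord0 j) %/ 2)%Z * 2 = A k2 ord0 j - A k1 ord0 j)%R.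
  move=> j; apply: divzK.
  by apply: par_dvd; rewrite (hA j).
have exq : xi alpha q b = (2 : R)^-1 *: (xi alpha (P k2) (A k2) - xi alpha (P k1) (A k1)).
  rewrite xi_sub; last exact: ltnW.
  apply/rowP => j; rewrite !mxE -hq.
  move: (hb j); set z := (_ %/ 2)%Z => hbj; by rewrite -hbj natrM intrM; field.
have q1 : (1 <= q)%N by move: hq; lia.
have qk : (q <= P k1 - 1)%N by move: hq hlt; lia.
have [_ [h2 _]] := hs.1 k1 k11.
have := h2 q b; rewrite q1 qk => /(_ isT).
rewrite exq (nfZp hf) ?invr_ge0 //.
have := nfD hf (xi alpha (P k2) (A k2)) (- xi alpha (P k1) (A k1)).
rewrite (nfN hf).
have := L_decr hs k11 k12; lra.
Qed.

Lemma lagarias (R : realType) n (f : 'rV[R]_n -> R) alpha P A :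
  is_norm f -> best_approx_seq f alpha P A ->
  forall k, (1 <= k)%N -> (2 * P k <= P (k + 2 ^ n.+1))%N.
Proof.
move=> hf hs k k1.
pose cls (i : 'I_(2 ^ n.+1).+1) : bool * {ffun 'I_n -> bool} :=
  (odd (P (k + i)), [ffun j => ((A (k + i) ord0 j %% 2)%Z == 0)]).
have : ~~ injectiveb cls.
  apply/negP => /injectiveP /leq_card.
  by rewrite card_prod card_ffun !card_bool !card_ord expnS ltnn.
move=> /injectivePn [i1 [i2 i12 hc]].
have key : forall a b : 'I_(2 ^ n.+1).+1, (a < b)%N -> cls a = cls b ->
    (2 * P k <= P (k + 2 ^ n.+1))%N.
  move=> a b ab [ho hA].
  have hA' : forall j, ((A (k + a) ord0 j %% 2)%Z == 0) = ((A (k + b) ord0 j %% 2)%Z == 0).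
    by move=> j; have := congr1 (fun g : {ffun 'I_n -> bool} => g j) hA; rewrite !ffunE.
  have ab' : (k + a < k + b)%N by rewrite ltn_add2l.
  have h3 := pair_lemma hf hs (leq_trans k1 (leq_addr a k)) ab' ho hA'.
  have h4 := P_mono hs k1 (leq_addr a k).
  have hb2 : (k + b <= k + 2 ^ n.+1)%N by rewrite leq_add2l -ltnS ltn_ord.
  have h5 := P_mono hs (leq_trans k1 (leq_addr b k)) hb2.
  lia.
case: (ltngtP i1 i2) => [lt|gt|eq]; [exact: key lt hc | exact: key gt (esym hc) |].
by move/val_inj: eq => eq; rewrite eq eqxx in i12.
Qed.

Lemma lagarias_iter (R : realType) n (f : 'rV[R]_n -> R) alpha P A :
  is_norm f -> best_approx_seq f alpha P A ->
  forall t k, (1 <= k)%N -> (2 ^ t * P k <= P (k + t * 2 ^ n.+1))%N.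
Proof.
move=> hf hs; elim=> [|t IH] k k1; first by rewrite expn0 mul1n mul0n addn0.
have h2 := lagarias hf hs (leq_trans k1 (leq_addr (t * 2 ^ n.+1) k)).
have h1 := IH k k1.
rewrite -addnA -mulSnr in h2.
rewrite expnS -mulnA; apply: leq_trans h2; by rewrite leq_mul2l h1 orbT.
Qed.

Lemma frac_itv (R : realType) (x : R) :
  0 <= x - (Num.floor x)%:~R < 1.
Proof.
have /andP[h1 h2] := floor_itv x; rewrite intrD in h2.
apply/andP; split; lra.
Qed.

Lemma dirichlet (R : realType) n (alpha : 'rV[R]_n) (Q : nat) : (1 <= Q)%N ->
  exists q b, (1 <= q <= Q ^ n)%N /\ forall i, `|xi alpha q b 0 i| < Q%:R^-1.
Proof.
case: Q => // Q' _; set Q := Q'.+1.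
pose fr (x : R) := x - (Num.floor x)%:~R.
pose box (t : 'I_(Q ^ n).+1) : {ffun 'I_n -> 'I_Q} :=
  [ffun i => inord (Num.truncn (Q%:R * fr (t%:R * alpha 0 i)))].
have : ~~ injectiveb box.
  apply/negP => /injectiveP /leq_card.
  by rewrite card_ffun !card_ord ltnn.
move=> /injectivePn [t1 [t2 t12 hb]].
have Q0 : (0 : R) < Q%:R by rewrite ltr0n.
have key : forall a b : 'I_(Q ^ n).+1, (a < b)%N -> box a = box b ->
    exists q b, (1 <= q <= Q ^ n)%N /\ forall i, `|xi alpha q b 0 i| < Q%:R^-1.
  move=> a b ab hab.
  exists (b - a)%N, (\row_i (Num.floor (b%:R * alpha 0 i) - Num.floor (a%:R * alpha 0 i))).
  split; first by have := ltn_ord b; lia.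
  move=> i.
  have e : xi alpha (b - a) (\row_i (Num.floor (b%:R * alpha 0 i) - Num.floor (a%:R * alpha 0 i))) 0 i
      = fr (b%:R * alpha 0 i) - fr (a%:R * alpha 0 i).
    by rewrite xiE mxE natrB ?(ltnW ab) // intrB /fr; ring.
  rewrite e.
  have := congr1 (fun g : {ffun 'I_n -> 'I_Q} => val (g i)) hab; rewrite /box !ffunE /=.
  have tlt : forall y : R, 0 <= y < 1 -> (Num.truncn (Q%:R * y) < Q)%N.
    move=> y /andP[y0 y1]; rewrite truncn_lt_nat ?mulr_ge0 ?ler0n //.
    by rewrite -[X in _ < X]mulr1 ltr_pM2l.
  have fa := frac_itv (a%:R * alpha 0 i); have fb := frac_itv (b%:R * alpha 0 i).
  rewrite !inordK ?tlt // => heq.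
  have ia := truncn_itv (mulr_ge0 (ltW Q0) (proj1 (andP fa))).
  have ib := truncn_itv (mulr_ge0 (ltW Q0) (proj1 (andP fb))).
  move: ia ib; rewrite /fr in heq *; rewrite heq.
  set x := b%:R * alpha 0 i - _; set y := a%:R * alpha 0 i - _.
  set K := Num.truncn _.
  rewrite -addn1 natrD => /andP[i1 i2] /andP[i3 i4].
  rewrite (_ : x - y = Q%:R^-1 * (Q%:R * x - Q%:R * y)); last by field; rewrite lt0r_neq0.
  rewrite normrM gtr0_norm ?invr_gt0 // gtr_pMr ?invr_gt0 // ltr_norml.
  apply/andP; split; lra.
case: (ltngtP t1 t2) => [lt|gt|eq]; [exact: key lt hb | exact: key gt (esym hb) |].
by move/val_inj: eq => eq; rewrite eq eqxx in t12.
Qed.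

Lemma dirichlet_f (R : realType) n (f : 'rV[R]_n -> R) (alpha : 'rV[R]_n) (Q : nat) :
  is_norm f -> (1 <= Q)%N ->
  exists q b, (1 <= q <= Q ^ n)%N /\
    f (xi alpha q b) <= Q%:R^-1 * \sum_(j < n) f (delta_mx 0 j).
Proof.
move=> hf Q1; have [q [b [hq hb]]] := dirichlet alpha Q1.
exists q, b; split => //.
apply: le_trans (nf_upper hf _) _; rewrite mulr_sumr; apply: ler_sum => j _.
by apply: ler_wpM2r; [exact: nf_ge0 | exact: ltW].
Qed.

Lemma distZ_le (R : realType) (x : R) (z : int) : distZ x <= `|x - z%:~R|.
Proof.
rewrite /distZ; have /andP[h1 h2] := floor_itv x; rewrite intrD in h2.
have [zle|zgt] := leP z (Num.floor x).
  have : (z%:~R : R) <= (Num.floor x)%:~R by rewrite ler_int.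
  move=> hz; rewrite ger0_norm; last lra.
  rewrite ge_min; apply/orP; left; lra.
have : ((Num.floor x + 1)%:~R : R) <= z%:~R by rewrite ler_int; lia.
rewrite intrD => hz; rewrite ler0_norm; last lra.
rewrite ge_min; apply/orP; right; lra.
Qed.

Lemma ba_lower (R : realType) n (f : 'rV[R]_n -> R) (c D : R) alpha p a :
  is_norm f -> 0 <= c -> (forall x, c * `|x| <= f x) -> badly_approx alpha D -> (1 <= p)%N ->
  c * (D * p%:R `^ (- n%:R^-1)) <= f (xi alpha p a).
Proof.
move=> hf c0 hc hba p1; apply: le_trans (hc _); apply: ler_wpM2l => //.
apply: le_trans (hba p p1) _.
apply: bigmax_le => // j _.
apply: le_trans (coord_le_norm _ j); rewrite xiE; exact: distZ_le.
Qed.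

Lemma root_facts (R : realType) n (p : nat) : (1 <= n)%N -> (1 <= p)%N ->
  let x := (p%:R : R) `^ (n%:R^-1) in
  [/\ 1 <= x, x ^+ n = p%:R & (p%:R : R) `^ (- n%:R^-1) = x^-1].
Proof.
move=> n1 p1 x; split.
- rewrite /x -[X in X <= _](powRr0 (p%:R : R)); apply: ler_powR.
    by rewrite ler1n.
  by rewrite invr_ge0 ler0n.
- rewrite /x -powR_mulrn ?powR_ge0 // -powRrM mulVf ?powRr1 ?ler0n //.
  by rewrite pnatr_eq0 -lt0n.
- by rewrite powRN.
Qed.

Lemma real_ineq (R : realType) (c C' D' K x Q : R) : 0 < c -> 0 < C' -> 0 < D' -> 1 <= x ->
  2 * C' <= K * c -> 2 * C' <= K * D' -> K * x < Q -> 1 <= K ->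
  C' / Q < c / 2 /\ C' / Q < D' / (2 * x).
Proof.
move=> c0 C0 D0 x1 hKc hKD hQ K1.
have Q0 : 0 < Q by nra.
split.
  rewrite ltr_pdivrMr //.
  have : c * (K * x) < c * Q by rewrite ltr_pM2l.
  nra.
rewrite ltr_pdivrMr // mulrAC ltr_pdivlMr; last by nra.
have : D' * (K * x) < D' * Q by rewrite ltr_pM2l.
nra.
Qed.

Lemma decay (R : realType) n (f : 'rV[R]_n -> R) (c D : R) :
  (1 <= n)%N -> is_norm f -> 0 < c -> (forall x, c * `|x| <= f x) -> 0 < D ->
  exists M : nat, (1 <= M)%N /\
  forall alpha P A, badly_approx alpha D -> best_approx_seq f alpha P A ->
  forall nu, (1 <= nu)%N ->
    f (xi alpha (P (nu + M)) (A (nu + M))) < c / 2 /\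
    f (xi alpha (P (nu + M)) (A (nu + M))) <= f (xi alpha (P nu) (A nu)) / 2.
Proof.
move=> n1 hf c0 hc D0.
pose C := \sum_(j < n) f (delta_mx 0 j).
have C0 : 0 <= C by rewrite /C sumr_ge0 // => j _; exact: nf_ge0.
pose C' := C + 1.
have C'0 : 0 < C' by rewrite /C'; lra.
pose D' := c * D.
have D'0 : 0 < D' by rewrite /D' mulr_gt0.
pose K := Num.max (2 * C' / D') (Num.max (2 * C' / c) 1).
have K1 : 1 <= K by rewrite /K !le_max lexx !orbT.
have KD : 2 * C' <= K * D'.
  rewrite -ler_pdivrMr //; by rewrite /K !le_max lexx.
have Kc : 2 * C' <= K * c.
  rewrite -ler_pdivrMr //; by rewrite /K !le_max lexx orbT.
pose t := (Num.truncn ((2 * K) ^+ n)).+1.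
have ht : (2 * K) ^+ n < (2 ^ t)%:R.
  apply: lt_le_trans (truncnS_gt _) _; rewrite ler_nat.
  exact: ltnW (ltn_expl _ (ltnSn 1)).
exists (t * 2 ^ n.+1)%N; split; first by rewrite muln_gt0 expn_gt0.
move=> alpha P A hba hs nu nu1.
set j := (nu + t * 2 ^ n.+1)%N.
have j1 : (1 <= j)%N by rewrite /j; lia.
have p1 := P_ge1 hs nu1.
have [x1 xn xinv] := @root_facts R n (P nu) n1 p1.
set x := (P nu)%:R `^ n%:R^-1 in x1 xn xinv.
pose Q := (Num.truncn (K * x)).+1.
have hQ : K * x < Q%:R by exact: truncnS_gt.
have hQ2 : Q%:R <= 2 * K * x.
  rewrite /Q -addn1 natrD.
  have := truncn_le (K * x); rewrite mulr_ge0 ?(le_trans ler01 K1) ?(le_trans ler01 x1) //.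
  move=> h; have : 1 <= K * x by rewrite -[1]mulr1 ler_pM // ler01.
  lra.
have hQn : (Q ^ n < P j.+1)%N.
  have h1 : (((Q ^ n)%N)%:R : R) < ((2 ^ t * P nu)%N)%:R.
    have Q0 : (0 : R) <= Q%:R by rewrite ler0n.
    have h2 : Q%:R ^+ n <= (2 * K * x) ^+ n.
      by apply: lerXn2r; rewrite ?nnegrE //; apply: le_trans Q0 hQ2.
    have h3 : (2 * K * x) ^+ n = (2 * K) ^+ n * (P nu)%:R by rewrite exprMn xn.
    rewrite natrX natrM; apply: le_lt_trans h2 _; rewrite h3 ltr_pM2r ?ltr0n //.
  rewrite ltr_nat in h1.
  apply: leq_trans h1 _; apply: leq_trans (lagarias_iter hf hs t nu1) _.
  exact: ltnW (hs.2.1 j j1).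
have [q [b [/andP[q1 qQ] hfq]]] := dirichlet_f alpha hf (ltn0Sn (Num.truncn (K * x))).
have hB := @claimB R n f c alpha P A hf c0 hc hs j q b j1 q1 (leq_ltn_trans qQ hQn).
have [i1 i2] := real_ineq c0 C'0 D'0 x1 Kc KD hQ K1.
have hfq' : f (xi alpha q b) < C' / Q%:R.
  apply: le_lt_trans hfq _; rewrite mulrC ltr_pM2r ?invr_gt0 ?ltr0n // /C' -/C; lra.
have hlow := @ba_lower R n f c D alpha (P nu) (A nu) hf (ltW c0) hc hba p1.
rewrite xinv in hlow.
have hLj : f (xi alpha (P j) (A j)) <= f (xi alpha q b).
  move: hB; rewrite ge_min => /orP[//|h]; lra.
have e2 : D' / (2 * x) = c * (D * x^-1) / 2.
  by rewrite /D'; field; apply: lt0r_neq0; lra.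
split; first lra.
rewrite e2 in i2; lra.
Qed.

Lemma bernoulli_ineq (R : realType) (e : R) (m : nat) : 0 <= e <= 1 ->
  1 - m%:R * e <= (1 - e) ^+ m.
Proof.
move=> /andP[e0 e1]; elim: m => [|m IH]; first by rewrite mul0r subr0 expr0.
rewrite exprSr -natr1.
have h : (1 - m%:R * e) * (1 - e) <= (1 - e) ^+ m * (1 - e).
  by rewrite ler_wpM2r // subr_ge0.
have hm : 0 <= m%:R * e :> R by rewrite mulr_ge0 ?ler0n.
nra.
Qed.

Lemma L_pos (R : realType) n (f : 'rV[R]_n -> R) (c D : R) alpha P A :
  is_norm f -> 0 < c -> (forall x, c * `|x| <= f x) -> 0 < D ->
  badly_approx alpha D -> best_approx_seq f alpha P A ->
  forall k, (1 <= k)%N -> 0 < f (xi alpha (P k) (A k)).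
Proof.
move=> hf c0 hc D0 hba hs k k1.
apply: lt_le_trans (@ba_lower R n f c D alpha (P k) (A k) hf (ltW c0) hc hba (P_ge1 hs k1)).
by rewrite mulr_gt0 // mulr_gt0 // powR_gt0 // ltr0n (P_ge1 hs k1).
Qed.

Lemma step (R : realType) n (f : 'rV[R]_n -> R) (c D s delta : R) alpha P A :
  is_norm f -> 0 < c -> (forall x, c * `|x| <= f x) -> 0 < D -> 0 < s < 1 ->
  (forall U V, f U = 1 -> f V = 1 -> f (V - U) <= 1 + delta -> f (s *: V - U) < 1) ->
  badly_approx alpha D -> best_approx_seq f alpha P A ->
  forall j, (1 <= j)%N -> f (xi alpha (P j) (A j)) < c / 2 ->
  let Xi := fun k => (f (xi alpha (P k) (A k)))^-1 *: xi alpha (P k) (A k) in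
  fball f (1 + delta) (Xi j) (Xi j.+1) ->
  s * f (xi alpha (P j) (A j)) < f (xi alpha (P j.+1) (A j.+1)).
Proof.
move=> hf c0 hc D0 /andP[s0 s1] hKC hba hs j j1 hLc Xi hball.
set xj := xi alpha (P j) (A j) in hLc *; set xk := xi alpha (P j.+1) (A j.+1).
set Lj := f xj; set Lk := f xk.
have Lj0 : 0 < Lj := L_pos hf c0 hc D0 hba hs j1.
have Lk0 : 0 < Lk := L_pos hf c0 hc D0 hba hs (ltn0Sn j).
rewrite ltNge; apply/negP => hle.
have hloc := local_step hf c0 hc hs j1; rewrite -/xj -/xk -/Lj in hloc.
rewrite min_l in hloc; last exact: ltW hLc.
set U := Lj^-1 *: xj; set V := Lk^-1 *: xk.
have fU : f U = 1 by rewrite /U (nfZp hf) ?invr_ge0 ?ltW // mulVf // gt_eqF.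
have fV : f V = 1 by rewrite /V (nfZp hf) ?invr_ge0 ?ltW // mulVf // gt_eqF.
have hVU : f (V - U) <= 1 + delta by exact: hball.
have hs1 := hKC U V fU fV hVU.
set r := Lk / Lj.
have r0 : 0 < r by rewrite /r divr_gt0.
have rs : r <= s by rewrite /r ler_pdivrMr //.
set t := r / s.
have t0 : 0 < t by rewrite /t divr_gt0.
have t1 : t <= 1 by rewrite /t ler_pdivrMr // mul1r.
have t01 : 0 <= t <= 1 by apply/andP; split; [exact: ltW|].
have e1 : xk - xj = Lj *: ((1 - t) *: (- U) + t *: (s *: V - U)).
  apply/rowP => i; rewrite !mxE /t /r /U /V /Lj /Lk.
  by field; rewrite !gt_eqF.
have h2 := nf_cvx hf (- U) (s *: V - U) t01; rewrite (nfN hf) fU in h2.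
set z := f ((1 - t) *: - U + t *: (s *: V - U)) in h2.
have hloc' : Lj <= Lj * z.
  by move: hloc; rewrite e1 (nfZp hf); last exact: ltW Lj0.
have h3 : t * f (s *: V - U) < t * 1 by rewrite ltr_pM2l.
have h4 : z < 1 by lra.
have h5 : Lj * z < Lj * 1 by rewrite ltr_pM2l.
lra.
Qed.

Unset Implicit Arguments.

Theorem theorem2p5 (R : realType) (n : nat) (f : 'rV[R]_n -> R) (D : R) :
  (1 <= n)%N -> strictly_convex_norm f -> 0 < D ->
  exists (w : nat) (delta : R), 0 < delta /\
    forall (alpha : 'rV[R]_n) (P : nat -> nat) (A : nat -> 'rV[int]_n),
      badly_approx alpha D ->
      best_approx_seq f alpha P A ->
      forall nu : nat, (1 <= nu)%N ->
        exists j : nat, (nu <= j <= nu + w)%N /\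
          let Xi := fun k => (f (xi alpha (P k) (A k)))^-1 *: xi alpha (P k) (A k) in
          ~ fball f (1 + delta) (Xi j) (Xi j.+1).
Proof.
move=> n1 sc D0; have hf := sc.1.
have [c c0 hc] := nf_lower n1 hf.
have [M [M1 hdec]] := decay n1 hf c0 hc D0.
pose eps : R := (2 * (M.+1)%:R)^-1.
have eps0 : 0 < eps by rewrite /eps invr_gt0 mulr_gt0 // ltr0n.
have eps1 : eps <= 2^-1.
  rewrite /eps lef_pV2 ?posrE ?mulr_gt0 ?ltr0n //.
  rewrite -[X in X <= _]mulr1 ler_pM2l // ler1n //.
pose s := 1 - eps.
have s01 : 0 < s < 1 by apply/andP; split; rewrite /s; lra.
have [delta d0 hKC] := KC n1 sc s01.
exists (M + M)%N, delta; split => //.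
move=> alpha P A hba hs nu nu1.
have [//|H] := pselect (exists j : nat, (nu <= j <= nu + (M + M))%N /\
          let Xi := fun k => (f (xi alpha (P k) (A k)))^-1 *: xi alpha (P k) (A k) in
          ~ fball f (1 + delta) (Xi j) (Xi j.+1)).
exfalso.
pose L k := f (xi alpha (P k) (A k)).
have Hall : forall j, (nu <= j <= nu + (M + M))%N ->
    fball f (1 + delta) ((L j)^-1 *: xi alpha (P j) (A j))
                        ((L j.+1)^-1 *: xi alpha (P j.+1) (A j.+1)).
  move=> j hj; have [//|hn] := pselect (fball f (1 + delta) ((L j)^-1 *: xi alpha (P j) (A j))
                        ((L j.+1)^-1 *: xi alpha (P j.+1) (A j.+1))).
  by exfalso; apply: H; exists j; split.
have [hA hB] := hdec alpha P A hba hs nu nu1.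
have [_ hB2] := hdec alpha P A hba hs (nu + M)%N (leq_trans nu1 (leq_addr _ _)).
have LM0 : 0 < L (nu + M)%N := L_pos hf c0 hc D0 hba hs (leq_trans nu1 (leq_addr _ _)).
have chain : forall i, (i <= M)%N -> s ^+ i * L (nu + M)%N <= L (nu + M + i)%N.
  elim=> [|i IH] hi; first by rewrite expr0 mul1r addn0.
  have j1 : (1 <= nu + M + i)%N by rewrite -addnA; exact: leq_trans nu1 (leq_addr _ _).
  have hLj : L (nu + M + i)%N <= L (nu + M)%N.
    case: i {IH hi j1} => [|i]; first by rewrite addn0.
    have hlt : (nu + M < nu + M + i.+1)%N by rewrite -[X in (X < _)%N]addn0 ltn_add2l.
    exact: ltW (L_decr hs (leq_trans nu1 (leq_addr _ _)) hlt).
  have hLc : L (nu + M + i)%N < c / 2 by apply: le_lt_trans hLj hA.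
  have hw : (nu <= nu + M + i <= nu + (M + M))%N.
    by rewrite -addnA leq_addr /= !leq_add2l; exact: ltnW hi.
  have := step hf c0 hc D0 s01 hKC hba hs j1 hLc (Hall _ hw).
  rewrite addnS -/(L _) -/(L _) => hst.
  have := IH (ltnW hi).
  rewrite exprS -mulrA => h.
  apply: le_trans (ltW hst); apply: ler_wpM2l; [rewrite /s; lra| exact: h].
have hM := chain M (leqnn M).
have e01 : 0 <= eps <= 1 by apply/andP; split; lra.
have hb := @bernoulli_ineq R eps M e01.
have heps : eps * (2 * (M.+1)%:R) = 1 by rewrite /eps mulVf // mulf_neq0 // pnatr_eq0.
have hMe : M%:R * eps < 2^-1.
  rewrite /eps ltr_pdivrMr ?mulr_gt0 ?ltr0n // mulrA mulVf ?mul1r ?ltr_nat //.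
have hsM : 2^-1 < s ^+ M by rewrite /s; lra.
move: hsM hM hB2 LM0; rewrite -/(L _) -/(L _).
set a := s ^+ M; set b := L (nu + M)%N; set d := L (nu + M + M)%N.
move=> h1 h2 h3 h4.
have : 2^-1 * b < a * b by rewrite ltr_pM2r.
lra.
Qed.
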